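(* Let $\sigma_A>0$, let $A\in\mathbb R^{m\times d}$ have i.i.d. entries $A_{i,j}\sim\mathcal N(0,\sigma_A^2)$, let $b\in\mathbb R^m$, let $\phi(z)=\max\{z,0\}$ be the ReLU applied coordinatewise, and let $f(x)=\phi(Ax+b)$ for $x\in[0,1]^d$. Define the $\ell_1$ global sensitivity \[ \mathrm{GS}_1(f)=\sup\{\|f(x_1)-f(x_2)\|_1 : x_1,x_2\in[0,1]^d \text{ differ in at most one entry}\}. \] Then for any $\delta\in(0,1)$, \[ \Pr_A\Big[\mathrm{GS}_1(f)\le \sigma_A m+4\sigma_A\sqrt m\,\log^{1.5}(md/\delta)\Big]\ge 1-\delta . \]
   Context: $\|v\|_1=\sum_i|v_i|$. The probability is over the random matrix $A$. *)

(* Defs.v *)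
From HB Require Import structures.
From mathcomp Require Import all_boot all_order all_algebra.
From mathcomp Require Import all_classical all_reals all_analysis.
Set Implicit Arguments. Unset Strict Implicit. Unset Printing Implicit Defensive.
Import Order.TTheory GRing.Theory Num.Theory.
Local Open Scope classical_set_scope.
Local Open Scope ring_scope.

(* Mutual independence of a finite family of real random variables X k
   (k ranging over a finType I): the joint law of every choice of Borel sets
   factorizes.  (Taking B k = setT for unused indices covers all subfamilies.) *)
Definition mutually_independent_RVs {R : realType} {d : measure_display}
  {T : measurableType d} (P : probability T R) (I : finType) (X : I -> T -> R) :=
  forall B : I -> set R, (forall k, measurable (B k)) ->
    P (\bigcap_(k in [set: I]) (X k @^-1` B k)) = (\prod_(k : I) P (X k @^-1` B k))%E.

(* X has law N(0, s^2) (normal_prob takes mean and standard deviation). *)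
Definition is_normal_RV {R : realType} {d : measure_display}
  {T : measurableType d} (P : probability T R) (mu s : R) (X : T -> R) :=
  forall B : set R, measurable B -> P (X @^-1` B) = normal_prob mu s B.

Definition relu_layer {R : realType} (m d : nat) (A : 'I_m -> 'I_d -> R)
  (b : 'I_m -> R) (x : 'I_d -> R) : 'I_m -> R :=
  fun i => Num.max (\sum_(j < d) A i j * x j + b i) 0.

Definition unit_cube {R : realType} (d : nat) : set ('I_d -> R) :=
  [set x | forall j, 0 <= x j <= 1].

Definition differ_at_most_one {R : realType} (d : nat) (x1 x2 : 'I_d -> R) :=
  (#|[set j : 'I_d | x1 j != x2 j]| <= 1)%N.

Definition l1norm {R : realType} (m : nat) (v : 'I_m -> R) : R :=
  \sum_(i < m) `|v i|.

(* l1 global sensitivity of f over [0,1]^d (neighbouring = differ in <= 1 entry).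
   The set is bounded (f is Lipschitz on a compact set), so [sup] is the true sup. *)
Definition GS1 {R : realType} (m d : nat) (f : ('I_d -> R) -> ('I_m -> R)) : R :=
  sup [set r : R | exists x1 x2, unit_cube x1 /\ unit_cube x2 /\
        differ_at_most_one x1 x2 /\ r = l1norm (fun i => f x1 i - f x2 i)].

(* Main.v *)
Require Import Defs.
From HB Require Import structures.
From mathcomp Require Import all_boot all_order all_algebra.
From mathcomp Require Import all_classical all_reals all_analysis.
From mathcomp Require Import measurable_realfun.
From mathcomp Require Import ring lra zify.
Import Order.TTheory GRing.Theory Num.Theory.
Local Open Scope classical_set_scope.
Local Open Scope ring_scope.

Section gen.
Context {d : measure_display} {T : measurableType d} {R : realType}.

Lemma int_sum_indic (mu : measure T R) (K : finType) (w : K -> R)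
  (F : K -> set T) (rho : T -> R) :
  (forall k, 0 <= w k) -> (forall k, measurable (F k)) ->
  measurable_fun setT rho -> (forall x, 0 <= rho x) ->
  (\int[mu]_x (\sum_k w k * \1_(F k) x * rho x)%:E =
   \sum_k (w k)%:E * \int[mu]_(x in F k) (rho x)%:E)%E.
Proof.
move=> w0 mF mrho rho0.
under eq_integral do rewrite -sumEFin.
rewrite ge0_integral_sum//; last first.
- by move=> k x _; rewrite lee_fin mulr_ge0 ?mulr_ge0 ?indic_ge0.
- move=> k; apply/measurable_EFinP; apply: measurable_funM => //.
  apply: measurable_funM => //; exact: measurable_indic.
apply: eq_bigr => k _.
under eq_integral do rewrite -mulrA EFinM.
rewrite (ge0_integralZl mu measurableT); first last.
- by have := w0 k; rewrite -lee_fin.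
- by move=> x _; rewrite lee_fin mulr_ge0 ?indic_ge0.
- apply/measurable_EFinP; apply: measurable_funM => //; exact: measurable_indic.
congr (_ * _)%E.
rewrite [RHS]integral_mkcond; apply: eq_integral => x _.
by rewrite patchE indicE; case: (x \in F k); rewrite ?mul1r ?mul0r.
Qed.

Lemma markov_sets (mu : measure T R) (G : set T) (c : R) (K : finType)
  (w : K -> R) (F : K -> set T) :
  measurable G -> 0 <= c -> (forall k, 0 <= w k) -> (forall k, measurable (F k)) ->
  (forall x, G x -> c <= \sum_k w k * \1_(F k) x) ->
  (c%:E * mu G <= \sum_k (w k)%:E * mu (F k))%E.
Proof.
move=> mG c0 w0 mF H.
have -> : (c%:E * mu G = \int[mu]_x (\sum_(u : unit) c * \1_G x * 1)%:E)%E.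
  rewrite int_sum_indic//; try (by move=> ?); try exact: measurable_cst.
  by rewrite big_const card_unit /= integral_cst// mul1e adde0.
have -> : (\sum_k (w k)%:E * mu (F k) =
    \int[mu]_x (\sum_k w k * \1_(F k) x * 1)%:E)%E.
  rewrite int_sum_indic//; try (by move=> ?); try exact: measurable_cst.
  by apply: eq_bigr => k _; rewrite integral_cst// mul1e.
apply: ge0_le_integral => //.
- by move=> x _; rewrite lee_fin sumr_ge0// => u _; rewrite mulr1 mulr_ge0 ?indic_ge0.
- apply/measurable_EFinP; apply: measurable_sum => u.
  apply: measurable_funM => //; apply: measurable_funM => //; exact: measurable_indic.
- apply/measurable_EFinP; apply: measurable_sum => u.
  apply: measurable_funM => //; apply: measurable_funM => //; exact: measurable_indic.
move=> x _; rewrite lee_fin big_const card_unit /= addr0 !mulr1.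
under eq_bigr do rewrite mulr1.
rewrite indicE; case: (boolP (x \in G)) => xG.
  by rewrite mulr1; apply: H; rewrite -in_setE.
by rewrite mulr0 sumr_ge0// => k _; rewrite mulr_ge0 ?indic_ge0.
Qed.

Lemma mpre_gt (f : T -> R) (c : R) : measurable_fun setT f ->
  measurable [set x | c < f x].
Proof.
move=> mf; have := mf measurableT `]c, +oo[%classic (measurable_itv _).
rewrite setTI; congr measurable; apply/seteqP; split => x /=;
  by rewrite in_itv /= andbT.
Qed.

Lemma mpre_le (f : T -> R) (c : R) : measurable_fun setT f ->
  measurable [set x | f x <= c].
Proof.
move=> mf; have := mf measurableT `]-oo, c]%classic (measurable_itv _).
rewrite setTI; congr measurable; apply/seteqP; split => x /=;
  by rewrite in_itv /=.
Qed.

End gen.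

Section gauss.
Context {R : realType}.
Notation mu := (@lebesgue_measure R).

Lemma normal_pdf_pos (s x : R) : s != 0 ->
  normal_pdf 0 s x = normal_peak s * normal_fun 0 s x.
Proof. by move=> s0; rewrite /normal_pdf (negbTE s0). Qed.

Lemma peak_scale (sig q : R) : 0 < sig -> 0 < q ->
  normal_peak (sig / q) = q * normal_peak sig.
Proof.
move=> s0 q0; rewrite /normal_peak.
have := @pi_ge0 R; move: (@pi R) => p p0.
have -> : (sig / q) ^+ 2 * p *+ 2 = (Num.sqrt (sig ^+ 2 * p *+ 2) / q) ^+ 2.
  rewrite [RHS]expr_div_n sqr_sqrtr; last by apply: mulrn_wge0; rewrite mulr_ge0 ?sqr_ge0.
  rewrite expr_div_n.
  ring.
rewrite sqrtr_sqr ger0_norm; last by rewrite divr_ge0 ?sqrtr_ge0 ?ltW.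
by rewrite invf_div mulrC.
Qed.

Lemma expo_scale (sig q x : R) : 0 < sig -> 0 < q ->
  (1 - q ^+ 2) * x ^+ 2 / (sig ^+ 2 *+ 2) + - (x - 0) ^+ 2 / (sig ^+ 2 *+ 2)
  = - (x - 0) ^+ 2 / ((sig / q) ^+ 2 *+ 2).
Proof.
move=> s0 q0; rewrite subr0.
field.
by rewrite gt_eqF //= gt_eqF.
Qed.


Lemma gauss_chi (sig lam : R) : 0 < sig -> 0 <= lam < 1 ->
  (\int[mu]_x (expR (lam * x ^+ 2 / (sig ^+ 2 *+ 2)) * normal_pdf 0 sig x)%:E
   = ((Num.sqrt (1 - lam))^-1)%:E)%E.
Proof.
move=> sig0 /andP[l0 l1].
have q0 : 0 < Num.sqrt (1 - lam) by rewrite sqrtr_gt0 subr_gt0.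
have q2 : Num.sqrt (1 - lam) ^+ 2 = 1 - lam by rewrite sqr_sqrtr // subr_ge0 ltW.
move: (Num.sqrt (1 - lam)) q0 q2 => q q0 q2.
have hl : lam = 1 - q ^+ 2 by rewrite q2; ring.
have pt : forall x, expR (lam * x ^+ 2 / (sig ^+ 2 *+ 2)) * normal_pdf 0 sig x
    = q^-1 * normal_pdf 0 (sig / q) x.
  move=> x; rewrite !normal_pdf_pos ?gt_eqF ?divr_gt0 // peak_scale // /normal_fun.
  rewrite -(expo_scale sig q x sig0 q0) expRD -hl.
  by field; rewrite gt_eqF.
under eq_integral do rewrite pt EFinM.
rewrite integralZl //; last exact: integrable_normal_pdf.
by rewrite integral_normal_pdf mule1.
Qed.

Lemma normal_markov (sig : R) (K : finType) (w : K -> R) (B : K -> set R)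
  (g : R -> R) :
  (forall k, 0 <= w k) -> (forall k, measurable (B k)) ->
  measurable_fun setT g -> (forall y, 0 <= g y) ->
  (forall y, \sum_k w k * \1_(B k) y <= g y) ->
  (\sum_k (w k)%:E * normal_prob 0 sig (B k) <=
   \int[mu]_x (g x * normal_pdf 0 sig x)%:E)%E.
Proof.
move=> w0 mB mg g0 H.
rewrite /normal_prob -(int_sum_indic mu K w B (normal_pdf 0 sig)) //; last first.
- by move=> x; apply: normal_pdf_ge0.
- exact: measurable_normal_pdf.
apply: ge0_le_integral => //.
- by move=> x _; rewrite lee_fin sumr_ge0 // => k _; rewrite !mulr_ge0 ?indic_ge0 ?normal_pdf_ge0.
- apply/measurable_EFinP; apply: measurable_sum => k.
  apply: measurable_funM; last exact: measurable_normal_pdf.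
  by apply: measurable_funM; [exact: measurable_cst | exact: (measurable_indic (mB k))].
- apply/measurable_EFinP; apply: measurable_funM; [exact: mg | exact: measurable_normal_pdf].
move=> x _; rewrite lee_fin -mulr_suml ler_wpM2r ?normal_pdf_ge0 //.
Qed.

End gauss.

Section real.
Context {R : realType}.

Definition cnt (N : nat) (x : R) : R := \sum_(k < N) (if (k.+1)%:R <= x then 1 else 0).

Lemma sN_spec (N : nat) (x : R) : 0 <= x ->
  [/\ cnt N x <= x, (x <= N%:R -> x - 1 <= cnt N x) &
      (N%:R <= x -> cnt N x = N%:R)].
Proof.
rewrite /cnt; move=> x0; elim: N => [|N [IH1 IH2 IH3]].
  by rewrite big_ord0; split => // h; lra.
rewrite big_ord_recr /=.
set s := \sum_(i < N) _.
have hN : (N.+1%:R : R) = N%:R + 1 by rewrite natr1.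
case: (lerP (N.+1)%:R x) => h /=.
- have sN : s = N%:R by apply: IH3; lra.
  by rewrite sN; split => *; lra.
- rewrite addr0; split; [exact: IH1 | | by move=> h3; lra].
  move=> _; case: (lerP x N%:R) => h2; first exact: IH2.
  have sN : s = N%:R by apply: IH3; lra.
  by rewrite sN; lra.
Qed.

Lemma min_prod_ge (I : finType) (g : I -> R) (K : R) : 1 <= K ->
  (forall i, 1 <= g i) ->
  Num.min (\prod_i g i) K <= \prod_i Num.min (g i) K.
Proof.
move=> K1 g1.
pose P (y1 y2 : R) := [/\ 1 <= y1, 1 <= y2 & Num.min y1 K <= y2].
suff [] : P (\prod_i g i) (\prod_i Num.min (g i) K) by [].
apply: (big_rec2 P).
  by split => //; rewrite ge_min lexx.
move=> i y1 y2 _ [h1 h2 h3]; have a1 := g1 i; move: a1 h3.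
move: (g i) => a a1 h3.
have m1 : 1 <= Num.min a K by rewrite le_min a1 K1.
split.
- nra.
- nra.
case: (leP a K) => haK.
  move: h3; case: (leP y1 K) => hy h3.
    by rewrite ge_min; apply/orP; left; nra.
  by rewrite ge_min; apply/orP; right; nra.
by rewrite ge_min; apply/orP; right; nra.
Qed.

Lemma phi_bounds (n N : nat) (y : R) : (0 < n)%N -> 1 <= y ->
  n%:R^-1 * cnt N (n%:R * y) <= y /\
  (1 - n%:R^-1) * Num.min y (n%:R^-1 * N%:R) <= n%:R^-1 * cnt N (n%:R * y).
Proof.
move=> n0 y1.
have nR : 0 < (n%:R : R) by rewrite ltr0n.
have wn : n%:R^-1 * n%:R = 1 :> R by rewrite mulVf ?gt_eqF.
have w0 : 0 < (n%:R : R)^-1 by rewrite invr_gt0.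
have w1 : (n%:R : R)^-1 <= 1 by rewrite invr_le1 ?unitfE ?gt_eqF // ler1n.
have [S1 S2 S3] := sN_spec N (n%:R * y) (mulr_ge0 (ltW nR) (le_trans ler01 y1)).
move: S1 S2 S3; set s := cnt N _ => S1 S2 S3.
move: wn w0 w1; set w := (n%:R : R)^-1 => wn w0 w1.
split.
  have : w * s <= w * (n%:R * y) by rewrite ler_wpM2l // ltW.
  by rewrite mulrA wn mul1r.
have hm1 : Num.min y (w * N%:R) <= y by rewrite ge_min lexx.
have hm2 : Num.min y (w * N%:R) <= w * N%:R by rewrite ge_min lexx orbT.
case: (lerP (n%:R * y) N%:R) => h.
  have := S2 h => h2.
  have : w * (n%:R * y - 1) <= w * s by rewrite ler_wpM2l // ltW.
  rewrite mulrBr mulrA wn mul1r mulr1 => h3.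
  nra.
rewrite S3; last exact: ltW.
have hN0 : 0 <= w * N%:R by rewrite mulr_ge0 // ltW.
have h1w : 0 <= 1 - w by lra.
apply: le_trans (ler_wpM2l h1w hm2) _.
by rewrite mulrBl mul1r gerBl mulr_ge0 // ltW.
Qed.

Lemma bernoulli_ineq (x : R) (m : nat) : 0 <= x <= 1 ->
  1 - m%:R * x <= (1 - x) ^+ m.
Proof.
move=> /andP[x0 x1]; elim: m => [|m IH]; first by rewrite expr0 mul0r subr0.
rewrite exprS -natr1.
have h : 0 <= 1 - x by lra.
have : (1 - x) * (1 - m%:R * x) <= (1 - x) * (1 - x) ^+ m by rewrite ler_wpM2l.
have : 0 <= (m%:R : R) * x ^+ 2 by rewrite mulr_ge0 ?sqr_ge0.
nra.
Qed.

End real.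

Section N.
Context {R : realType}.

Lemma M_bound (lam : R) : 0 <= lam <= 1/2 ->
  (Num.sqrt (1 - lam))^-1 <= expR (lam / 2 + lam ^+ 2).
Proof.
move=> /andP[l0 l1].
have q0 : 0 < Num.sqrt (1 - lam) by rewrite sqrtr_gt0; lra.
have q2 : Num.sqrt (1 - lam) ^+ 2 = 1 - lam by rewrite sqr_sqrtr //; lra.
move: (Num.sqrt (1 - lam)) q0 q2 => q q0 q2.
set e := expR (lam / 2 + lam ^+ 2).
have e0 : 0 < e by rewrite expR_gt0.
have E2 : e ^+ 2 = expR lam * expR (2 * lam ^+ 2).
  by rewrite /e -expRM_natl -expRD; congr expR; field.
have h1 := expR_ge1Dx lam; have h2 := expR_ge1Dx (2 * lam ^+ 2).
have P1 : (1 + lam) * (1 + 2 * lam ^+ 2) <= expR lam * expR (2 * lam ^+ 2).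
  apply: ler_pM => //; [lra | by rewrite addr_ge0 // mulr_ge0 // sqr_ge0].
have P2 : (1 - lam) * ((1 + lam) * (1 + 2 * lam ^+ 2)) <=
          (1 - lam) * (expR lam * expR (2 * lam ^+ 2)).
  by apply: ler_wpM2l => //; lra.
have P3 : 1 <= (1 - lam) * ((1 + lam) * (1 + 2 * lam ^+ 2)).
  have : lam ^+ 2 <= 1/4 by nra.
  nra.
have key0 : 1 <= (q * e) ^+ 2 by rewrite exprMn q2 E2; lra.
have key : 1 <= q * e.
  have : 0 <= q * e by rewrite mulr_ge0 // ltW.
  nra.
have qi0 : 0 <= q^-1 by rewrite invr_ge0 ltW.
rewrite -[q^-1]mulr1; apply: le_trans (ler_wpM2l qi0 key) _.
by rewrite mulrA mulVf ?gt_eqF // mul1r.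
Qed.

Lemma powR32 (L : R) : 0 <= L -> powR L (3 / 2) = L * Num.sqrt L.
Proof.
move=> L0; case: (eqVneq L 0) => [->|L0'].
  by rewrite powR0 ?mul0r // gt_eqF //; lra.
have -> : (3 / 2 : R) = 1 + 2^-1 by field.
by rewrite powRD ?L0' ?implybT // powRr1 // powR12_sqrt.
Qed.

Lemma expR_half : 59/100 <= expR (- (1/2) : R).
Proof.
have -> : (- (1/2) : R) = 8%:R * (- (1/16)) by field.
rewrite expRM_natl.
have h := expR_ge1Dx (- (1/16) : R).
move: (expR (- (1/16))) h => a ha.
have a2 : 8789/10000 <= a ^+ 2 by rewrite expr2; nra.
have a4 : 7724/10000 <= a ^+ 2 * a ^+ 2 by nra.
have -> : a ^+ 8 = (a ^+ 2 * a ^+ 2) * (a ^+ 2 * a ^+ 2) by rewrite -!exprD.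
nra.
Qed.

Lemma ln_ge (x a : R) : 0 < x -> expR a <= x -> a <= ln x.
Proof. by move=> x0 h; rewrite -ler_expR lnK // posrE. Qed.

Lemma expR_half_ub : expR (1/2 : R) <= 2.
Proof.
have h := expR_half.
have : expR (1/2 : R) * expR (- (1/2)) = 1 by rewrite -expRD subrr expR0.
have := expR_gt0 (1/2 : R).
nra.
Qed.

Lemma e_lb : 9/4 <= expR (1 : R).
Proof.
have -> : (1 : R) = 2%:R * (1/2) by field.
rewrite expRM_natl.
have h := expR_ge1Dx (1/2 : R).
have : 0 <= 1 + 1/2 :> R by lra.
move: (expR (1/2)) h => a ha h0.
rewrite expr2; nra.
Qed.

Lemma m1_ineq (L r : R) : 2/5 <= L -> 0 <= r -> r ^+ 2 = L ->
  1 + L <= 3 * (1 + 4 * (L * r)) ^+ 2 / 8.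
Proof.
move=> L0 r0 rL.
have r63 : 63/100 <= r by nra.
have hv : 63/100 * L <= L * r by nra.
have hv2 : 16/100 * L <= (L * r) ^+ 2.
  rewrite exprMn rL; nra.
move: (L * r) hv hv2 => v hv hv2.
nra.
Qed.

End N.

Section N2.
Context {R : realType}.
Notation mu := (@lebesgue_measure R).

Lemma normal_center (sig : R) : 0 < sig ->
  ((2/5)%:E <= normal_prob 0 sig `[(- sig)%R, sig]%classic)%E.
Proof.
move=> s0.
set c := normal_peak sig * (59/100).
have pk0 : 0 < normal_peak sig by rewrite normal_peak_gt0 // gt_eqF.
have pkE : normal_peak sig = (sig * Num.sqrt (pi *+ 2))^-1.
  rewrite /normal_peak -mulrnAr sqrtrM ?sqr_ge0 // sqrtr_sqr ger0_norm //.
  exact: ltW.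
have pi4 : pi < 4 :> R by have := @pihalf_lt2 R; lra.
have sq : Num.sqrt (pi *+ 2) <= 59/20 :> R.
  have -> : (59/20 : R) = Num.sqrt ((59/20) ^+ 2) by rewrite sqrtr_sqr ger0_norm //.
  rewrite ler_sqrt; last by rewrite sqr_ge0.
  rewrite -mulr_natr; lra.
have sq0 : 0 < Num.sqrt (pi *+ 2) :> R.
  by rewrite sqrtr_gt0 pmulrn_lgt0 // pi_gt0.
have H1 : 2/5 <= c * (2 * sig).
  rewrite /c pkE invfM.
  have -> : sig^-1 * (Num.sqrt (pi *+ 2))^-1 * (59 / 100) * (2 * sig) =
            (59/50) / Num.sqrt (pi *+ 2).
    first [ by field; split; rewrite gt_eqF | by field; rewrite gt_eqF | by field; apply/andP; split; rewrite gt_eqF ].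
  rewrite ler_pdivlMr //; lra.
apply: (@le_trans _ _ (c * (2 * sig))%:E); first by rewrite lee_fin.
have -> : (c * (2 * sig))%:E = (\int[mu]_(x in `[(- sig)%R, sig]%classic) (cst c%:E) x)%E.
  rewrite integral_cst //= lebesgue_measure_itv /= lte_fin.
  have -> : (- sig < sig) = true by apply/idP; lra.
  by rewrite -EFinD -EFinM; congr EFin; ring.
rewrite /normal_prob; apply: ge0_le_integral => //.
- by move=> x _; rewrite lee_fin /c mulr_ge0 // ltW.
- by apply/measurable_EFinP; apply: measurable_funTS; exact: measurable_normal_pdf.
move=> x; rewrite /= in_itv /= => /andP[x1 x2].
rewrite lee_fin normal_pdf_pos ?gt_eqF // /c ler_wpM2l //; first exact: ltW.
apply: le_trans expR_half _; rewrite /normal_fun ler_expR subr0.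
rewrite mulNr lerN2 ler_pdivrMr; last by rewrite pmulrn_lgt0 // exprn_gt0.
have : x ^+ 2 <= sig ^+ 2 by rewrite !expr2; nra.
rewrite -mulr_natr; lra.
Qed.

End N2.

Section D1.
Context {R : realType} {dT : measure_display} {T : measurableType dT}.

Definition pr (P : probability T R) (A : set T) : R := fine (P A).

Lemma prE (P : probability T R) A : measurable A -> P A = (pr P A)%:E.
Proof. by move=> mA; rewrite /pr fineK // fin_num_measure. Qed.

Lemma pr_ge0 (P : probability T R) A : 0 <= pr P A.
Proof. by rewrite /pr fine_ge0 // measure_ge0. Qed.

Lemma mpre_ge (f : T -> R) (c : R) : measurable_fun setT f ->
  measurable [set x | c <= f x].
Proof.
move=> mf; have := mf measurableT `[c, +oo[%classic (measurable_itv _).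
rewrite setTI; congr measurable; apply/seteqP; split => x /=;
  by rewrite in_itv /= andbT.
Qed.

Lemma indic_le (f : R -> R) (a y : R) :
  \1_([set z | a <= f z]) y = (if a <= f y then 1 else 0 : R).
Proof.
rewrite indicE; case: ifPn => h.
  by rewrite mem_set.
by rewrite memNset //=; apply/negP.
Qed.

Lemma prod_indic (m : nat) (X : 'I_m -> T -> R) (C : 'I_m -> set R) (w : T) :
  \prod_i \1_(C i) (X i w) = \1_(\bigcap_(i in [set: 'I_m]) (X i @^-1` C i)) w :> R.
Proof.
case: (pselect (forall i, C i (X i w))) => H.
  rewrite big1; last by move=> i _; rewrite indicE mem_set.
  by rewrite indicE mem_set // => i _; exact: H.
have [i0 Hi0] : exists i0, ~ C i0 (X i0 w).
  by apply/existsNP => H'; apply: H => i; exact: H'.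
rewrite (bigD1 i0) //= indicE memNset // mul0r indicE memNset //.
by move=> Hc; apply: Hi0; exact: Hc.
Qed.

Lemma expand_prod (m N : nat) (wt : R) (X : 'I_m -> T -> R)
  (C : 'I_N -> set R) (w : T) :
  \prod_(i < m) (\sum_(k < N) wt * \1_(C k) (X i w)) =
  \sum_(f : {ffun 'I_m -> 'I_N}) wt ^+ m *
     \1_(\bigcap_(i in [set: 'I_m]) (X i @^-1` C (f i))) w.
Proof.
rewrite bigA_distr_bigA; apply: eq_bigr => f _.
rewrite big_split /= prodr_const card_ord.
by rewrite (prod_indic m X (fun i => C (f i)) w).
Qed.

End D1.

Section D2.
Context {R : realType} {dT : measure_display} {T : measurableType dT}
  (P : probability T R).

Lemma chernoff_col (m : nat) (X : 'I_m -> T -> R) (sig lam c : R) (n : nat) :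
  0 < sig -> 0 <= lam < 1 -> (0 < n)%N ->
  (forall i, measurable_fun setT (X i)) ->
  (forall i, is_normal_RV P 0 sig (X i)) ->
  (forall C : 'I_m -> set R, (forall i, measurable (C i)) ->
     P (\bigcap_(i in [set: 'I_m]) (X i @^-1` C i)) =
     (\prod_(i : 'I_m) P (X i @^-1` C i))%E) ->
  pr P [set w | c < \sum_i X i w ^+ 2 / (sig ^+ 2 *+ 2)] *
    ((1 - n%:R^-1) ^+ m * expR (lam * c))
  <= (Num.sqrt (1 - lam))^-1 ^+ m.
Proof.
move=> sig0 /andP[l0 l1] n0 mX nX indep.
set g := fun y : R => expR (lam * y ^+ 2 / (sig ^+ 2 *+ 2)).
have g1 : forall y, 1 <= g y.
  move=> y; apply: le_trans (expR_ge1Dx _); rewrite lerDl.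
  apply: mulr_ge0; first by apply: mulr_ge0 => //; exact: sqr_ge0.
  by rewrite invr_ge0; apply: mulrn_wge0; exact: sqr_ge0.
have mg : measurable_fun setT g.
  apply: measurableT_comp => //; apply: measurable_funM => //.
  by apply: measurable_funM => //; exact: measurable_funX.
set w := (n%:R : R)^-1.
have nR : 0 < (n%:R : R) by rewrite ltr0n.
have w0 : 0 < w by rewrite invr_gt0.
have w1 : w <= 1 by rewrite invr_le1 ?unitfE ?gt_eqF // ler1n.
have wn : w * n%:R = 1 by rewrite mulVf ?gt_eqF.
set K0 := 1 + expR (lam * c).
set N := (n * (Num.truncn K0).+1)%N.
have wN : K0 <= w * N%:R.
  rewrite /N natrM mulrA wn mul1r; apply/ltW; exact: truncnS_gt.
have wN1 : 1 <= w * N%:R.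
  by apply: le_trans wN; rewrite lerDl ltW // expR_gt0.
have wNe : expR (lam * c) <= w * N%:R.
  by apply: le_trans wN; rewrite lerDr.
pose B (k : 'I_N) := [set y : R | (k.+1)%:R <= n%:R * g y].
have mB : forall k, measurable (B k).
  move=> k; apply: mpre_ge; apply: measurable_funM => //.
have phiE : forall y, \sum_k w * \1_(B k) y = w * cnt N (n%:R * g y).
  move=> y; rewrite /cnt mulr_sumr; apply: eq_bigr => k _.
  by rewrite /B indic_le.
pose F (f : {ffun 'I_m -> 'I_N}) := \bigcap_(i in [set: 'I_m]) (X i @^-1` B (f i)).
have mF : forall f, measurable (F f).
  move=> f; apply: fin_bigcap_measurable => // i _.
  rewrite -[X i @^-1` _]setTI; exact: (mX i) measurableT _ (mB (f i)).
set G := [set w | c < \sum_i X i w ^+ 2 / (sig ^+ 2 *+ 2)].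
have mG : measurable G.
  apply: mpre_gt; apply: measurable_sum => i.
  apply: measurable_funM => //; exact: measurable_funX.
have key : forall om, G om ->
    (1 - w) ^+ m * expR (lam * c) <=
    \sum_(f : {ffun 'I_m -> 'I_N}) w ^+ m * \1_(F f) om.
  move=> om Gom.
  rewrite -(expand_prod m N w X B om).
  have step1 : \prod_i ((1 - w) * Num.min (g (X i om)) (w * N%:R)) <=
               \prod_i (\sum_k w * \1_(B k) (X i om)).
    apply: ler_prod => i _; apply/andP; split.
      rewrite mulr_ge0 //; first by rewrite subr_ge0.
      by rewrite le_min (le_trans ler01 (g1 _)) (le_trans ler01 wN1).
    rewrite phiE; exact: (phi_bounds n N (g (X i om)) n0 (g1 _)).2.
  apply: le_trans step1.
  rewrite big_split /= prodr_const card_ord.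
  apply: ler_wpM2l; first by rewrite exprn_ge0 // subr_ge0.
  apply: le_trans (min_prod_ge _ _ _ wN1 (fun i => g1 (X i om))).
  rewrite le_min wNe andbT.
  rewrite /g -expR_sum ler_expR.
  under eq_bigr do rewrite -mulrA.
  by rewrite -mulr_sumr ler_wpM2l // ltW.
have c'0 : 0 <= (1 - w) ^+ m * expR (lam * c).
  apply: mulr_ge0; last exact: ltW (expR_gt0 _).
  by apply: exprn_ge0; rewrite subr_ge0.
have mk := markov_sets P G ((1 - w) ^+ m * expR (lam * c)) {ffun 'I_m -> 'I_N}
  (fun _ => w ^+ m) F mG c'0 (fun _ => exprn_ge0 m (ltW w0)) mF key.
have mpre : forall i k, measurable (X i @^-1` B k).
  move=> i k; rewrite -[X i @^-1` _]setTI; exact: (mX i) measurableT _ (mB k).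
have PF : forall f, P (F f) = (\prod_i pr P (X i @^-1` B (f i)))%:E.
  move=> f; rewrite /F indep; last by move=> i; exact: mB.
  by rewrite -prodEFin; apply: eq_bigr => i _; apply: prE.
have mk2 : (1 - w) ^+ m * expR (lam * c) * pr P G <=
    \sum_(f : {ffun 'I_m -> 'I_N}) w ^+ m * \prod_i pr P (X i @^-1` B (f i)).
  rewrite -lee_fin EFinM -sumEFin.
  under eq_bigr => f _ do rewrite EFinM -PF.
  rewrite /pr fineK; last exact: fin_num_measure.
  exact: mk.
rewrite mulrC; apply: le_trans mk2 _.
have -> : \sum_(f : {ffun 'I_m -> 'I_N}) w ^+ m * \prod_i pr P (X i @^-1` B (f i)) =
    \prod_(i < m) \sum_(k < N) w * pr P (X i @^-1` B k).
  rewrite bigA_distr_bigA; apply: eq_bigr => f _.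
  by rewrite big_split /= prodr_const card_ord.
have -> : (Num.sqrt (1 - lam))^-1 ^+ m = \prod_(i < m) (Num.sqrt (1 - lam))^-1.
  by rewrite prodr_const card_ord.
apply: ler_prod => i _; apply/andP; split.
  by apply: sumr_ge0 => k _; rewrite mulr_ge0 ?pr_ge0 // ltW.
have hm := normal_markov sig 'I_N (fun _ => w) B g (fun _ => ltW w0) mB mg
  (fun y => le_trans ler01 (g1 y)).
have : (\sum_k w%:E * normal_prob 0 sig (B k) <=
   \int[lebesgue_measure]_x (g x * normal_pdf 0 sig x)%:E)%E.
  apply: hm => y; rewrite phiE; exact: (phi_bounds n N (g y) n0 (g1 y)).1.
rewrite /g gauss_chi //; last by rewrite l0 l1.
have -> : (\sum_k w%:E * normal_prob 0 sig (B k) =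
    (\sum_k w * pr P (X i @^-1` B k))%:E)%E.
  rewrite -sumEFin; apply: eq_bigr => k _.
  by rewrite -(nX i (B k) (mB k)) (prE P _ (mpre i k)) EFinM.
by rewrite lee_fin.
Qed.

End D2.

Section E.
Context {R : realType}.

Lemma col_indep {dT : measure_display} {T : measurableType dT}
  (P : probability T R) (m d : nat) (A : 'I_m -> 'I_d -> T -> R) (j : 'I_d) :
  mutually_independent_RVs P (fun ij : 'I_m * 'I_d => A ij.1 ij.2) ->
  forall C : 'I_m -> set R, (forall i, measurable (C i)) ->
   P (\bigcap_(i in [set: 'I_m]) (A i j @^-1` C i)) =
   (\prod_(i : 'I_m) P (A i j @^-1` C i))%E.
Proof.
move=> H C mC.
pose Bp (k : 'I_m * 'I_d) := if k.2 == j then C k.1 else setT.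
have mBp : forall k, measurable (Bp k).
  by move=> k; rewrite /Bp; case: ifP.
have := H Bp mBp.
have -> : \bigcap_(k in [set: 'I_m * 'I_d])
    ((fun ij : 'I_m * 'I_d => A ij.1 ij.2) k @^-1` Bp k) =
    \bigcap_(i in [set: 'I_m]) (A i j @^-1` C i).
  apply/seteqP; split => x /= Hx.
    move=> i _; have := Hx (i, j) Logic.I; by rewrite /Bp /= eqxx.
  move=> [i j'] _; rewrite /Bp /=; case: eqP => [->|_] //.
  exact: Hx.
move=> ->.
rewrite -(pair_bigA _ (fun i j' => P (A i j' @^-1` Bp (i, j')))) /=.
apply: eq_bigr => i _.
rewrite (bigD1 j) //= /Bp /= eqxx big1 ?mule1 // => j' /negPf hj'.
by rewrite hj' preimage_setT probability_setT.
Qed.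

Lemma relu_lip (u v : R) : `|Num.max u 0 - Num.max v 0| <= `|u - v|.
Proof.
have H : forall a b : R, b <= a -> `|Num.max a 0 - Num.max b 0| <= a - b.
  move=> a b hab; rewrite ler_norml; apply/andP; split;
  case: (leP a 0) => ha; case: (leP b 0) => hb; lra.
case: (leP v u) => h.
  by rewrite [X in _ <= X]ger0_norm ?subr_ge0 //; apply: H.
rewrite distrC [X in _ <= X]distrC [X in _ <= X]ger0_norm; last by rewrite subr_ge0 ltW.
by apply: H; exact: ltW.
Qed.

Lemma GS1_le (m d : nat) (A : 'I_m -> 'I_d -> R) (b : 'I_m -> R) (Bd : R) :
  0 <= Bd -> (forall j, \sum_i `|A i j| <= Bd) ->
  GS1 (relu_layer A b) <= Bd.
Proof.
move=> B0 HB; rewrite /GS1; apply: ge_sup.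
  exists 0, (fun _ => 0), (fun _ => 0); split.
    by move=> j; rewrite lexx ler01.
  split; first by move=> j; rewrite lexx ler01.
  split.
    rewrite /differ_at_most_one; apply/card_le1_eqP => x y.
    by rewrite !inE /= eqxx.
  by rewrite /l1norm big1 // => i _; rewrite subrr normr0.
move=> r [x1 [x2 [c1 [c2 [dm ->]]]]].
have dm' : forall j1 j2, x1 j1 != x2 j1 -> x1 j2 != x2 j2 -> j1 = j2.
  move=> j1 j2 h1 h2.
  have := (card_le1_eqP dm) j2 j1.
  by rewrite !inE /= => /(_ h2 h1).
case: (pselect (exists j0, x1 j0 != x2 j0)) => [[j0 hj0]|hno].
  have eqo : forall j, j != j0 -> x1 j = x2 j.
    move=> j hj; apply/eqP; apply: contraT => hx.
    by rewrite (dm' j j0 hx hj0) eqxx in hj.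
  apply: le_trans (HB j0); rewrite /l1norm; apply: ler_sum => i _.
  apply: le_trans (relu_lip _ _) _.
  rewrite opprD addrACA subrr addr0 -sumrB (bigD1 j0) //= big1 ?addr0; last first.
    by move=> j hj; rewrite (eqo j hj) subrr.
  rewrite -mulrBr normrM; apply: ler_piMr => //.
  have := c1 j0; have := c2 j0; move=> /andP[a0 a1] /andP[b0 b1].
  by rewrite ler_norml; apply/andP; split; lra.
have eqa : forall j, x1 j = x2 j.
  move=> j; apply/eqP; apply: contraT => hx; exfalso; apply: hno; exists j; exact: hx.
have -> : x1 = x2 by apply: funext.
by rewrite /l1norm big1 // => i _; rewrite subrr normr0.
Qed.

End E.

Section F1.
Context {R : realType} {dT : measure_display} {T : measurableType dT}
  (P : probability T R).

Lemma pr_le (A B : set T) : measurable A -> measurable B -> A `<=` B ->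
  pr P A <= pr P B.
Proof.
move=> mA mB AB; rewrite /pr; apply: fine_le; rewrite ?fin_num_measure //.
by apply: le_measure => //; rewrite inE.
Qed.

Lemma abs_bound (sig x : R) : 0 < sig ->
  `|x| <= sig * (x ^+ 2 / (sig ^+ 2 *+ 2)) + sig / 2.
Proof.
move=> s0.
have -> : sig * (x ^+ 2 / (sig ^+ 2 *+ 2)) + sig / 2 = (x ^+ 2 + sig ^+ 2) / (2 * sig).
  by field; rewrite gt_eqF.
rewrite ler_pdivlMr; last by rewrite mulr_gt0.
have h := sqr_ge0 (`|x| - sig).
have hx : `|x| ^+ 2 = x ^+ 2 by rewrite real_normK // num_real.
nra.
Qed.

Lemma sum_abs_bound (m : nat) (X : 'I_m -> R) (sig : R) : 0 < sig ->
  \sum_i `|X i| <= sig * (\sum_i X i ^+ 2 / (sig ^+ 2 *+ 2)) + sig * m%:R / 2.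
Proof.
move=> s0.
have H : \sum_i `|X i| <= \sum_i (sig * (X i ^+ 2 / (sig ^+ 2 *+ 2)) + sig / 2).
  by apply: ler_sum => i _; exact: abs_bound.
apply: le_trans H _.
rewrite big_split /= sumr_const card_ord mulr_sumr -mulr_natr.
by rewrite le_eqVlt; apply/orP; left; apply/eqP; ring.
Qed.

Lemma mBd_set (m : nat) (X : 'I_m -> T -> R) (c : R) :
  (forall i, measurable_fun setT (X i)) ->
  measurable [set w | c < \sum_i `|X i w|].
Proof.
move=> mX; apply: mpre_gt; apply: measurable_sum => i.
exact: measurableT_comp (@normr_measurable R setT) (mX i).
Qed.

Lemma mG_set (m : nat) (X : 'I_m -> T -> R) (sig c : R) :
  (forall i, measurable_fun setT (X i)) ->
  measurable [set w | c < \sum_i X i w ^+ 2 / (sig ^+ 2 *+ 2)].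
Proof.
move=> mX; apply: mpre_gt; apply: measurable_sum => i.
apply: measurable_funM => //; exact: measurable_funX.
Qed.

End F1.

Section F2.
Context {R : realType} {dT : measure_display} {T : measurableType dT}
  (P : probability T R).

Lemma tail_m2 (m d : nat) (X : 'I_m -> T -> R) (sig delta : R) :
  (2 <= m)%N -> 0 < sig -> 0 < delta < 1 -> (0 < d)%N ->
  (forall i, measurable_fun setT (X i)) ->
  (forall i, is_normal_RV P 0 sig (X i)) ->
  (forall C : 'I_m -> set R, (forall i, measurable (C i)) ->
     P (\bigcap_(i in [set: 'I_m]) (X i @^-1` C i)) =
     (\prod_(i : 'I_m) P (X i @^-1` C i))%E) ->
  pr P [set w | sig * m%:R + 4 * sig * Num.sqrt m%:R *
     powR (ln ((m * d)%:R / delta)) (3 / 2) < \sum_i `|X i w|] <= delta / d%:R.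
Proof.
move=> m2 s0 /andP[d0 d1] dpos mX nX ind.
have mR : 2 <= (m%:R : R) by rewrite ler_nat.
have dR : 1 <= (d%:R : R) by rewrite ler1n.
have xE : (m * d)%:R / delta = m%:R * d%:R / delta :> R by rewrite -natrM.
rewrite xE; set x := m%:R * d%:R / delta.
have x2 : 2 <= x.
  rewrite /x ler_pdivlMr //; nra.
set L := ln x.
have L12 : 1/2 <= L.
  apply: ln_ge; first lra.
  by apply: le_trans expR_half_ub _.
have L0 : 0 <= L by lra.
have eL : expR (- L) = delta / (m%:R * d%:R).
  by rewrite expRN lnK ?posrE; [rewrite /x invf_div | lra].
rewrite powR32 //.
have r0 : 0 <= Num.sqrt L by exact: sqrtr_ge0.
have r2 : Num.sqrt L ^+ 2 = L by rewrite sqr_sqrtr.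
move: (Num.sqrt L : R) r0 r2 => r r0 r2.
have sm0 : 0 <= Num.sqrt (m%:R : R) by exact: sqrtr_ge0.
have sm2 : Num.sqrt (m%:R : R) ^+ 2 = m%:R by rewrite sqr_sqrtr // ler0n.
move: (Num.sqrt (m%:R : R) : R) sm0 sm2 => sm sm0 sm2.
set tau := 4 * sm * (L * r).
have tau0 : 0 <= tau by rewrite /tau !mulr_ge0.
set c := m%:R / 2 + tau.
set G := [set w | c < \sum_i X i w ^+ 2 / (sig ^+ 2 *+ 2)].
have mG : measurable G by exact: mG_set.
set E0 := [set w | _ < _].
have mE0 : measurable E0 by exact: mBd_set.
have sub : E0 `<=` G.
  move=> w; rewrite /E0 /G /= => H.
  have Hab := sum_abs_bound m (fun i => X i w) sig s0.
  have : sig * c < sig * (\sum_i X i w ^+ 2 / (sig ^+ 2 *+ 2)).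
    rewrite /c /tau.
    have : sig * m%:R + 4 * sig * sm * (L * r) <
           sig * (\sum_i X i w ^+ 2 / (sig ^+ 2 *+ 2)) + sig * m%:R / 2.
      exact: lt_le_trans H Hab.
    move: (\sum_i X i w ^+ 2 / (sig ^+ 2 *+ 2)) => Q HQ.
    have -> : sig * (m%:R / 2 + 4 * sm * (L * r)) =
      sig * m%:R + 4 * sig * sm * (L * r) - sig * m%:R / 2 by field.
    lra.
  by rewrite ltr_pM2l.
apply: le_trans (pr_le P _ _ mE0 mG sub) _.
have pr0 : 0 <= pr P G by exact: pr_ge0.
have main : forall lam, 0 <= lam <= 1/2 ->
    m%:R * lam ^+ 2 - lam * tau <= - L -> pr P G <= delta / d%:R.
  move=> lam /andP[l0 l1] hexp.
  have n0 : (0 < 100 * m)%N by rewrite muln_gt0 /= (leq_trans _ m2).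
  have lam1 : 0 <= lam < 1 by apply/andP; split => //; lra.
  have Hc := chernoff_col P m X sig lam c (100 * m)%N s0 lam1 n0 mX nX ind.
  set w := ((100 * m)%N%:R : R)^-1.
  have mw : m%:R * w = 1/100.
    by rewrite /w natrM; field; rewrite gt_eqF // ltr0n (leq_trans _ m2).
  have w0 : 0 <= w by rewrite invr_ge0 ler0n.
  have w1 : w <= 1 by nra.
  have bern : 99/100 <= (1 - w) ^+ m.
    apply: le_trans (bernoulli_ineq w m _); first lra.
    by rewrite w0 w1.
  have e0 := expR_gt0 (lam * c).
  have HM : (Num.sqrt (1 - lam))^-1 ^+ m <= expR (m%:R * (lam / 2 + lam ^+ 2)).
    rewrite expRM_natl; apply: lerXn2r.
    - by rewrite nnegrE invr_ge0 sqrtr_ge0.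
    - by rewrite nnegrE expR_ge0.
    by apply: M_bound; rewrite l0 l1.
  have H1 : pr P G * (99/100 * expR (lam * c)) <= expR (m%:R * (lam / 2 + lam ^+ 2)).
    have h99 : 99/100 * expR (lam * c) <= (1 - w) ^+ m * expR (lam * c).
      by rewrite ler_pM2r.
    apply: le_trans HM; apply: le_trans Hc; rewrite /G.
    by apply: ler_pM.
  have H2 : expR (m%:R * (lam / 2 + lam ^+ 2)) =
      expR (lam * c) * expR (m%:R * lam ^+ 2 - lam * tau).
    by rewrite -expRD; congr expR; rewrite /c; field.
  rewrite H2 in H1.
  have hE : expR (m%:R * lam ^+ 2 - lam * tau) <= expR (- L) by rewrite ler_expR.
  have H3 : pr P G * (99/100) <= expR (- L).
    apply: le_trans hE.
    rewrite -(ler_pM2l e0); apply: le_trans H1.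
    by rewrite le_eqVlt; apply/orP; left; apply/eqP; ring.
  rewrite eL in H3.
  have hD : delta / (m%:R * d%:R) = (delta / d%:R) / m%:R.
    by field; apply/andP; split; rewrite gt_eqF // ltr0n ?(leq_trans _ m2).
  rewrite hD ler_pdivlMr in H3; last by lra.
  nra.
case: (lerP tau m%:R) => ht.
  apply: (main (tau / (2 * m%:R))).
    apply/andP; split; first by rewrite divr_ge0 //; lra.
    by rewrite ler_pdivrMr; lra.
  have t2 : tau ^+ 2 = 16 * (sm ^+ 2) * (L ^+ 2 * r ^+ 2) by rewrite /tau; ring.
  rewrite sm2 r2 in t2.
  have -> : m%:R * (tau / (2 * m%:R)) ^+ 2 - tau / (2 * m%:R) * tau =
            - (tau ^+ 2 / (4 * m%:R)) by field; rewrite gt_eqF //; lra.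
  rewrite t2.
  have -> : 16 * m%:R * (L ^+ 2 * L) / (4 * m%:R) = 4 * L ^+ 3.
    by field; rewrite gt_eqF //; lra.
  rewrite lerN2.
  have : 1 <= 4 * L ^+ 2 by nra.
  rewrite exprS; nra.
apply: (main (1/2)); first lra.
have smr : 1 <= sm * r.
  have : 1 <= (sm * r) ^+ 2 by rewrite exprMn sm2 r2; nra.
  have : 0 <= sm * r by rewrite mulr_ge0.
  nra.
have ht2 : 4 * L <= tau by rewrite /tau; nra.
lra.
Qed.

End F2.

Section F3.
Context {R : realType} {dT : measure_display} {T : measurableType dT}
  (P : probability T R).

Lemma tail_m1 (d : nat) (X : 'I_1 -> T -> R) (sig delta : R) :
  0 < sig -> 0 < delta < 1 -> (0 < d)%N ->
  (forall i, measurable_fun setT (X i)) ->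
  (forall i, is_normal_RV P 0 sig (X i)) ->
  (forall C : 'I_1 -> set R, (forall i, measurable (C i)) ->
     P (\bigcap_(i in [set: 'I_1]) (X i @^-1` C i)) =
     (\prod_(i : 'I_1) P (X i @^-1` C i))%E) ->
  pr P [set w | sig * 1%:R + 4 * sig * Num.sqrt 1%:R *
     powR (ln ((1 * d)%:R / delta)) (3 / 2) < \sum_i `|X i w|] <= delta / d%:R.
Proof.
move=> s0 /andP[d0 d1] dpos mX nX ind.
have dR : 1 <= (d%:R : R) by rewrite ler1n.
have xE : ((1 * d)%:R : R) = d%:R by congr (_%:R); exact: mul1n.
rewrite xE mulr1n sqrtr1 !mulr1.
set x := d%:R / delta.
have x1 : 1 < x by rewrite /x ltr_pdivlMr //; lra.
set L := ln x.
have L0 : 0 < L by rewrite /L ln_gt0.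
have eL : expR (- L) = delta / d%:R.
  by rewrite expRN lnK ?posrE; [rewrite /x invf_div | lra].
rewrite powR32; last exact: ltW.
have r0 : 0 <= Num.sqrt L by exact: sqrtr_ge0.
have r2 : Num.sqrt L ^+ 2 = L by rewrite sqr_sqrtr // ltW.
move: (Num.sqrt L : R) r0 r2 => r r0 r2.
set E0 := [set w | _ < _].
have mE0 : measurable E0 by exact: mBd_set.
have pr0 : forall A, 0 <= pr P A by move=> A; exact: pr_ge0.
rewrite -eL.
set Y := X ord0.
have sumY : forall w, \sum_(i < 1) `|X i w| = `|Y w| by move=> w; rewrite big_ord1.
have LR : 0 <= L * r by rewrite mulr_ge0 // ltW.
case: (lerP L (2/5)) => hL.
  set I := `[(- sig)%R, sig]%classic.
  have mI : measurable I by exact: measurable_itv.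
  have mYI : measurable (Y @^-1` I).
    by rewrite -[Y @^-1` _]setTI; exact: (mX ord0) measurableT _ mI.
  have sub : E0 `<=` ~` (Y @^-1` I).
    move=> w; rewrite /E0 /= sumY => H; rewrite /I /= in_itv /= => /andP[h1 h2].
    have : `|Y w| <= sig by rewrite ler_norml h1 h2.
    have : 0 <= 4 * sig * (L * r) by rewrite !mulr_ge0 // ltW.
    lra.
  apply: le_trans (pr_le P _ _ mE0 (measurableC mYI) sub) _.
  have hc : pr P (~` (Y @^-1` I)) = 1 - pr P (Y @^-1` I).
    have := @probability_setC _ _ _ P _ mYI.
    rewrite (prE P _ (measurableC mYI)) (prE P _ mYI) => h.
    by apply/EFin_inj; rewrite h EFinB.
  rewrite hc.
  have hI : 2/5 <= pr P (Y @^-1` I).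
    rewrite /pr (nX ord0 I mI); have := normal_center sig s0.
    rewrite -/I => h; rewrite -lee_fin fineK //.
    by apply: fin_num_measure.
  have := expR_ge1Dx (- L).
  lra.
set s := 1 + 4 * (L * r).
set G := [set w | s ^+ 2 / 2 < \sum_(i < 1) X i w ^+ 2 / (sig ^+ 2 *+ 2)].
have mG : measurable G by exact: mG_set.
have sub : E0 `<=` G.
  move=> w; rewrite /E0 /G /= sumY big_ord1 => H.
  have hs0 : 0 <= sig * s by apply: mulr_ge0; [exact: ltW | rewrite /s; lra].
  have H' : sig * s < `|Y w| by rewrite /s; lra.
  have H2 : (sig * s) ^+ 2 < Y w ^+ 2.
    rewrite -[Y w ^+ 2]real_normK ?num_real //.
    move: (`|Y w|) H' => a Ha; move: (sig * s) hs0 Ha => b hb Ha; nra.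
  have hsig2 : 0 < sig ^+ 2 by rewrite exprn_gt0.
  have -> : Y w ^+ 2 / (sig ^+ 2 *+ 2) = (Y w ^+ 2 / sig ^+ 2) / 2.
    by field; rewrite gt_eqF.
  rewrite ltr_pM2r ?invr_gt0 // ltr_pdivlMr //.
  by rewrite mulrC -exprMn.
apply: le_trans (pr_le P _ _ mE0 mG sub) _.
have n0 : (0 < 100)%N by [].
have lam1 : 0 <= (3/4 : R) < 1 by apply/andP; split; lra.
have Hc := chernoff_col P 1 X sig (3/4) (s ^+ 2 / 2) 100 s0 lam1 n0 mX nX ind.
have sq : Num.sqrt (1 - 3/4 : R) = 1/2.
  have -> : (1 - 3/4 : R) = (1/2) ^+ 2 by field.
  by rewrite sqrtr_sqr ger0_norm //; lra.
rewrite sq !expr1 in Hc.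
have e1 : (1 - (100%:R : R)^-1) = 99/100 by field.
have e2 : ((1/2 : R))^-1 = 2 by field.
rewrite e1 e2 in Hc.
have hs : 1 + L <= 3 / 4 * (s ^+ 2 / 2).
  have := m1_ineq L r (ltW hL) r0 r2.
  by rewrite -/s (_ : 3 / 4 * (s ^+ 2 / 2) = 3 * s ^+ 2 / 8) //; field.
have hE : 9/4 * expR L <= expR (3/4 * (s ^+ 2 / 2)).
  apply: (@le_trans _ _ (expR 1 * expR L)).
    by rewrite ler_pM2r ?expR_gt0 // e_lb.
  by rewrite -expRD ler_expR.
have pG := pr0 G.
have H4 : pr P G * (99/100 * (9/4 * expR L)) <= 2.
  apply: le_trans Hc; apply: ler_wpM2l => //.
  by apply: ler_wpM2l => //; lra.
have ea := expR_gt0 L.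
rewrite expRN -[X in _ <= X]mul1r ler_pdivlMr //.
nra.
Qed.

End F3.

Section G.
Context {R : realType} {dT : measure_display} {T : measurableType dT}
  (P : probability T R).

Lemma col_tail (m d : nat) (X : 'I_m -> T -> R) (sig delta : R) :
  0 < sig -> 0 < delta < 1 -> (0 < d)%N ->
  (forall i, measurable_fun setT (X i)) ->
  (forall i, is_normal_RV P 0 sig (X i)) ->
  (forall C : 'I_m -> set R, (forall i, measurable (C i)) ->
     P (\bigcap_(i in [set: 'I_m]) (X i @^-1` C i)) =
     (\prod_(i : 'I_m) P (X i @^-1` C i))%E) ->
  pr P [set w | sig * m%:R + 4 * sig * Num.sqrt m%:R *
     powR (ln ((m * d)%:R / delta)) (3 / 2) < \sum_i `|X i w|] <= delta / d%:R.
Proof.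
case: m X => [|[|m']] X s0 hd dpos mX nX ind.
- have mA : measurable [set w | sig * 0%:R + 4 * sig * Num.sqrt 0%:R *
     powR (ln ((0 * d)%:R / delta)) (3 / 2) < \sum_i `|X i w|] by exact: mBd_set.
  apply: le_trans (pr_le P _ set0 mA measurable0 _) _.
    move=> w /=; rewrite big_ord0 (_ : (0%:R : R) = 0) // mulr0 sqrtr0 mulr0 mul0r.
    by rewrite addr0 ltxx.
  rewrite /pr measure0 /=; case/andP: hd => d0 _.
  by rewrite divr_ge0 // ltW.
- exact: tail_m1.
- by apply: tail_m2.
Qed.

End G.

Theorem lemmaD2 (R : realType) (dT : measure_display) (T : measurableType dT)
  (P : probability T R) (m d : nat) (sigmaA : R) (A : 'I_m -> 'I_d -> T -> R)
  (b : 'I_m -> R) (delta : R) :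
  0 < sigmaA ->
  (forall i j, measurable_fun [set: T] (A i j)) ->
  (forall i j, is_normal_RV P 0 sigmaA (A i j)) ->
  mutually_independent_RVs P (fun ij : 'I_m * 'I_d => A ij.1 ij.2) ->
  0 < delta < 1 ->
  exists E : set T, measurable E /\
    E `<=` [set w | GS1 (relu_layer (fun i j => A i j w) b)
                    <= sigmaA * m%:R
                       + 4 * sigmaA * Num.sqrt m%:R
                         * powR (ln ((m * d)%:R / delta)) (3 / 2)] /\
    (1 - delta%:E <= P E)%E.
Proof.
move=> s0 mA nA ind hd.
set Bd := sigmaA * m%:R + 4 * sigmaA * Num.sqrt m%:R *
  powR (ln ((m * d)%:R / delta)) (3 / 2).
have Bd0 : 0 <= Bd.
  rewrite /Bd; apply: addr_ge0.
    by apply: mulr_ge0; [exact: ltW | exact: ler0n].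
  apply: mulr_ge0; last exact: powR_ge0.
  apply: mulr_ge0; last exact: sqrtr_ge0.
  by apply: mulr_ge0; [lra | exact: ltW].
pose S (j : 'I_d) (w : T) := \sum_i `|A i j w|.
have mS : forall j, measurable_fun setT (S j).
  move=> j; apply: measurable_sum => i.
  exact: measurableT_comp (@normr_measurable R setT) (mA i j).
pose E := [set w | forall j, S j w <= Bd].
have mE : measurable E.
  have -> : E = \bigcap_(j in [set: 'I_d]) [set w | S j w <= Bd].
    apply/seteqP; split => w /= H j; first by move=> _; exact: H.
    exact: (H j Logic.I).
  apply: fin_bigcap_measurable => // j _; exact: mpre_le.
exists E; split => //; split.
  move=> w Hw /=; apply: GS1_le => // j; exact: Hw j.
pose F (j : 'I_d) := [set w | Bd < S j w].
have mF : forall j, measurable (F j) by move=> j; exact: mpre_gt.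
have key : forall w : T, (~` E) w -> (1 : R) <= \sum_(j < d) 1 * \1_(F j) w.
  move=> w /= Hw.
  have [j hj] : exists j, ~ (S j w <= Bd) by apply/existsNP.
  move/negP: hj; rewrite -ltNge => hj.
  rewrite (bigD1 j) //= mul1r indicE mem_set //.
  rewrite lerDl sumr_ge0 // => k _; rewrite mul1r indic_ge0 //.
have mk := markov_sets P (~` E) 1 'I_d (fun _ => 1) F (measurableC mE) ler01
  (fun _ => ler01) mF key.
have hF : forall j, pr P (F j) <= delta / d%:R.
  move=> j.
  have dpos : (0 < d)%N by exact: (leq_ltn_trans (leq0n j) (ltn_ord j)).
  exact: (col_tail P m d (fun i => A i j) sigmaA delta s0 hd dpos
    (fun i => mA i j) (fun i => nA i j) (col_indep P m d A j ind)).
have hsum : \sum_(j < d) pr P (F j) <= delta.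
  apply: le_trans (ler_sum _ (fun j _ => hF j)) _.
  rewrite sumr_const card_ord.
  case: (posnP d) => [->|dpos]; first by rewrite mulr0n; case/andP: hd => d0 _; exact: ltW.
  have -> : (delta / d%:R) *+ d = delta / d%:R * d%:R by rewrite mulr_natr.
  by rewrite divfK // gt_eqF // ltr0n.
have hc : pr P E = 1 - pr P (~` E).
  have := @probability_setC _ _ _ P _ (measurableC mE).
  rewrite setCK (prE P _ mE) (prE P _ (measurableC mE)) => h.
  by apply/EFin_inj; rewrite h EFinB.
have hmk : pr P (~` E) <= \sum_(j < d) pr P (F j).
  rewrite -lee_fin -sumEFin.
  have -> : \sum_(j < d) (pr P (F j))%:E = \sum_(j < d) (1%:E * P (F j))%E.
    by apply: eq_bigr => j _; rewrite mul1e (prE P _ (mF j)).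
  rewrite -(prE P _ (measurableC mE)) -[P (~` E)]mul1e.
  exact: mk.
rewrite (prE P _ mE) hc lee_fin.
case/andP: hd => d0 d1; lra.
Qed.
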